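(* Consider the approximate first-stage problem described in the context. If it has an optimal solution, then there always exists an optimal solution in which, for every $(i,t)$, the pair $(y_i^{+,t},y_i^{-,t})$ has the form $(y_i^{+,t},0)$ or $(0,y_i^{-,t})$.
   Context: Data: a directed graph $\mathcal{G}_\text{RV}=(\mathcal{N}_\text{RV},\mathcal{E}_\text{RV})$ of one-step rebalancing-vehicle (RV) movements, a set $\mathcal{N}_\text{SV}$ of stations, a finite set $\mathcal{V}$ of RVs each with integer capacity $\overline{b}$, horizon $T$, integer bound $\overline{y}$, costs $c_{i,j}^t\in\mathbb{R}$, $r_i^t\ge0$. A parameter vector $\theta=(\theta_0,(\theta_i^t)_{i,t})$ with $\theta_0\in\mathbb{R}$ and $\theta_i^t=([\theta_i^t]_{-\overline{y}},\dots,[\theta_i^t]_{\overline{y}-1})\in\mathbb{R}^{2\overline{y}}$ defines $\overline{V}_i^t(\cdot;\theta_i^t):[-\overline{y},\overline{y}]\to\mathbb{R}$ as the continuous piecewise linear function with $\overline{V}_i^t(0)=0$ whose slope on $[m,m+1]$ is $[\theta_i^t]_m$ for $m=-\overline{y},\dots,\overline{y}-1$, and $\overline{V}(y;\theta)=\theta_0+\sum_{t=1}^T\sum_{i\in\mathcal{N}_\text{SV}\cap\mathcal{N}_\text{RV}}\overline{V}_i^t(y_i^{-,t}-y_i^{+,t};\theta_i^t)$. The approximate first-stage problem is $$\min_{z,y,b}\ \sum_{t=1}^T\Big[\sum_{(i,j)\in\mathcal{E}_\text{RV}}c_{i,j}^tz_{i,j}^t+\sum_{i\in\mathcal{N}_\text{SV}\cap\mathcal{N}_\text{RV}}r_i^t(y_i^{+,t}+y_i^{-,t})\Big]+\overline{V}(y;\theta)$$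 subject to: $\sum_{(i,j)\in\mathcal{E}_\text{RV}}b_{i,j}^t=\sum_{(j,i)\in\mathcal{E}_\text{RV}}b_{j,i}^{t-1}+y_i^{+,t}-y_i^{-,t}$ and $\sum_{(i,j)\in\mathcal{E}_\text{RV}}z_{i,j}^t=\sum_{(j,i)\in\mathcal{E}_\text{RV}}z_{j,i}^{t-1}$ for $t=1,\dots,T$, $i\in\mathcal{N}_\text{RV}$; $0\le b_{i,j}^t\le\overline{b}z_{i,j}^t$ for $t=0,\dots,T$ with integers $b_{i,j}^0$ given; $0\le y_i^{+,t}\le\overline{y}$, $0\le y_i^{-,t}\le\overline{y}$; integers $z_{i,j}^0$ given with $\sum_{i,j}z_{i,j}^0=|\mathcal{V}|$; all $y,b,z$ integer-valued. (Variables $y_i^{\pm,t}$ are taken to be $0$ where not defined.) *)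

(* Defs.v *)
From HB Require Import structures.
From mathcomp Require Import all_boot all_order all_algebra.
Set Implicit Arguments. Unset Strict Implicit. Unset Printing Implicit Defensive.
Import Order.TTheory GRing.Theory Num.Theory.
Local Open Scope ring_scope.

(* Decision variables of the approximate first-stage problem.
   zv t i j = z_{i,j}^t, bv t i j = b_{i,j}^t, yp t i = y_i^{+,t}, ym t i = y_i^{-,t}.
   Only entries for edges (i,j) of E (resp. t in the relevant ranges) matter. *)
Record fs_sol (N : finType) := FsSol {
  zv : nat -> N -> N -> int;
  bv : nat -> N -> N -> int;
  yp : nat -> N -> int;
  ym : nat -> N -> int }.

(* Vbar_i^t evaluated at an integer point y: the continuous piecewise linear
   function with value 0 at 0 and slope th m on [m, m+1]. *)
Definition Vbar_pl (R : numDomainType) (th : int -> R) (y : int) : R :=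
  if (0 <= y)%R then \sum_(0 <= k < `|y|%N) th (k%:Z)
  else - \sum_(0 <= k < `|y|%N) th (- (k.+1)%:Z).

Section FirstStage.
Variables (R : realFieldType) (N : finType) (E : rel N) (S : {set N})
  (nV bbar T ybar : nat)
  (z0 b0 : N -> N -> int)
  (c : nat -> N -> N -> R) (r : nat -> N -> R)
  (th0 : R) (th : nat -> N -> int -> R).

(* Feasible set. N = N_RV, S = N_SV \cap N_RV, E = edge relation of G_RV. *)
Definition fs_feasible (s : fs_sol N) : Prop :=
  (forall t i, (1 <= t <= T)%N ->
     \sum_(j | E i j) bv s t i j
       = \sum_(j | E j i) bv s t.-1 j i + yp s t i - ym s t i) /\
  (forall t i, (1 <= t <= T)%N ->
     \sum_(j | E i j) zv s t i j = \sum_(j | E j i) zv s t.-1 j i) /\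
  (forall t i j, (t <= T)%N -> E i j ->
     0 <= bv s t i j <= (bbar%:Z) * zv s t i j) /\
  (forall i j, E i j -> bv s 0 i j = b0 i j) /\
  (forall i j, E i j -> zv s 0 i j = z0 i j) /\
  (forall t i, (1 <= t <= T)%N -> i \in S ->
     0 <= yp s t i <= ybar%:Z /\ 0 <= ym s t i <= ybar%:Z) /\
  (* y is 0 where not defined (nodes of N_RV that are not stations) *)
  (forall t i, (1 <= t <= T)%N -> i \notin S -> yp s t i = 0 /\ ym s t i = 0).

Definition fs_obj (s : fs_sol N) : R :=
  \sum_(1 <= t < T.+1)
     ( \sum_(i : N) \sum_(j | E i j) c t i j * (zv s t i j)%:~R
     + \sum_(i in S) r t i * (yp s t i + ym s t i)%:~R )
  + (th0 + \sum_(1 <= t < T.+1) \sum_(i in S)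
             Vbar_pl (th t i) (ym s t i - yp s t i)).

Definition fs_optimal (s : fs_sol N) : Prop :=
  fs_feasible s /\ forall s', fs_feasible s' -> fs_obj s <= fs_obj s'.
End FirstStage.

(* Main.v *)
Require Import Defs.
From HB Require Import structures.
From mathcomp Require Import all_boot all_order all_algebra.
From mathcomp Require Import zify.
Import Order.TTheory GRing.Theory Num.Theory.
Local Open Scope ring_scope.

Theorem lemma3 (R : realFieldType) (N : finType) (E : rel N) (S : {set N})
  (nV bbar T ybar : nat) (z0 b0 : N -> N -> int)
  (c : nat -> N -> N -> R) (r : nat -> N -> R) (th0 : R)
  (th : nat -> N -> int -> R)
  (hz0 : \sum_(i : N) \sum_(j | E i j) z0 i j = nV%:Z)
  (hr : forall t i, 0 <= r t i) :
  (exists s, fs_optimal E S bbar T ybar z0 b0 c r th0 th s) ->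
  exists s, fs_optimal E S bbar T ybar z0 b0 c r th0 th s /\
    forall t i, (1 <= t <= T)%N -> i \in S -> yp s t i = 0 \/ ym s t i = 0.
Proof.
case=> s [Fs Os].
pose m t i := if yp s t i <= ym s t i then yp s t i else ym s t i.
pose s' := FsSol (zv s) (bv s) (fun t i => yp s t i - m t i)
                 (fun t i => ym s t i - m t i).
have Ediff : forall t i, yp s' t i - ym s' t i = yp s t i - ym s t i.
  by move=> t i /=; rewrite opprB addrA subrK.
have Ediff2 : forall t i, ym s' t i - yp s' t i = ym s t i - yp s t i.
  by move=> t i /=; rewrite opprB addrA subrK.
case: Fs => [F1 [F2 [F3 [F4 [F5 [F6 F7]]]]]].
have Fs' : fs_feasible E S bbar T ybar z0 b0 s'.
  split.
    move=> t i ht; rewrite -addrA Ediff addrA; exact: F1.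
  split; first exact: F2.
  split; first exact: F3.
  split; first exact: F4.
  split; first exact: F5.
  split.
    move=> t i ht hi; have [/andP[a1 a2] /andP[b1 b2]] := F6 t i ht hi.
    rewrite /= /m; case: ifP => h; split; apply/andP; split; lia.
  move=> t i ht hi; have [h1 h2] := F7 t i ht hi.
  by rewrite /= /m h1 h2 lexx subrr.
have Obj : fs_obj E S T c r th0 th s' <= fs_obj E S T c r th0 th s.
  rewrite /fs_obj; apply: lerD; last first.
    rewrite lerD2l le_eqVlt; apply/orP; left; apply/eqP.
    apply: eq_big_nat => t _; apply: eq_bigr => i _; by rewrite Ediff2.
  apply: ler_sum_nat => t ht; rewrite lerD2l; apply: ler_sum => i hi.
  apply: ler_wpM2l => //; rewrite ler_int /=.
  have [/andP[a1 a2] /andP[b1 b2]] := F6 t i ht hi.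
  have hm : 0 <= m t i by rewrite /m; case: ifP.
  lia.
exists s'; split.
  split=> // s'' F''; apply: le_trans Obj _; exact: Os.
move=> t i _ _; rewrite /= /m; case: ifP => _; [left|right]; exact: subrr.
Qed.
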